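(* Let $A_1A_2A_3$ be a triangle in a Euclidean space $\mathbb{R}^n$, $n\ge2$, with angles $\alpha_k$ at $A_k$. For $0\le t_1\le1$ let $P=(1-t_1)A_1+t_1A_2$, and let $Q$ be the foot of the corresponding circumcevian, i.e. the point other than $A_3$ where the ray from $A_3$ through $P$ meets the circumcircle of the triangle. Then $Q=\frac{m_1A_1+m_2A_2+m_3A_3}{m_1+m_2+m_3}$ with $m_1=\{\sin^2\alpha_2+t_1\sin(\alpha_1-\alpha_2)\sin\alpha_3\}(1-t_1)$, $m_2=\{\sin^2\alpha_2+t_1\sin(\alpha_1-\alpha_2)\sin\alpha_3\}t_1$, $m_3=-(1-t_1)t_1\sin^2\alpha_3$.
   Context: Barycentric coordinates with respect to the (affinely independent) vertices $A_1,A_2,A_3$; they are homogeneous. *)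

(* Defs.v *)
From HB Require Import structures.
From mathcomp Require Import all_boot all_order all_algebra.
From mathcomp Require Import all_classical all_reals all_analysis.
Set Implicit Arguments. Unset Strict Implicit. Unset Printing Implicit Defensive.
Import Order.TTheory GRing.Theory Num.Theory.
Local Open Scope ring_scope.

Definition dotv (R : realType) (n : nat) (u v : 'rV[R]_n) : R := (u *m v^T) 0 0.
Definition normv (R : realType) (n : nat) (u : 'rV[R]_n) : R := Num.sqrt (dotv u u).

Definition vangle (R : realType) (n : nat) (A B C : 'rV[R]_n) : R :=
  acos (dotv (B - A) (C - A) / (normv (B - A) * normv (C - A))).

Definition is_triangle (R : realType) (n : nat) (A1 A2 A3 : 'rV[R]_n) : Prop :=
  \rank (col_mx (A2 - A1) (A3 - A1)) = 2%N.

Definition in_plane (R : realType) (n : nat) (A1 A2 A3 X : 'rV[R]_n) : Prop :=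
  exists a1 a2 a3 : R, a1 + a2 + a3 = 1 /\ X = a1 *: A1 + a2 *: A2 + a3 *: A3.

Definition on_circumcircle (R : realType) (n : nat) (A1 A2 A3 X : 'rV[R]_n) : Prop :=
  in_plane A1 A2 A3 X /\
  exists O : 'rV[R]_n, in_plane A1 A2 A3 O /\
    normv (A2 - O) = normv (A1 - O) /\ normv (A3 - O) = normv (A1 - O) /\
    normv (X - O) = normv (A1 - O).

Definition on_ray (R : realType) (n : nat) (A B X : 'rV[R]_n) : Prop :=
  exists s : R, 0 <= s /\ X = A + s *: (B - A).

(* Main.v *)
Require Import Defs.
From HB Require Import structures.
From mathcomp Require Import all_boot all_order all_algebra.
From mathcomp Require Import all_classical all_reals all_analysis.
From mathcomp Require Import ring lra.
Import Order.TTheory GRing.Theory Num.Theory.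
Local Open Scope ring_scope.

Section H.
Context {R : realType} {n : nat}.
Implicit Types (x y z : 'rV[R]_n).

Lemma dotvDl x y z : dotv (x + y) z = dotv x z + dotv y z.
Proof. by rewrite /dotv mulmxDl mxE. Qed.
Lemma dotvZl (a : R) x z : dotv (a *: x) z = a * dotv x z.
Proof. by rewrite /dotv -scalemxAl mxE. Qed.
Lemma dotvC x y : dotv x y = dotv y x.
Proof. by rewrite /dotv -[in LHS](trmxK (x *m y^T)) trmx_mul trmxK mxE. Qed.
Lemma dotvDr x y z : dotv z (x + y) = dotv z x + dotv z y.
Proof. by rewrite dotvC dotvDl !(dotvC z). Qed.
Lemma dotvZr (a : R) x z : dotv z (a *: x) = a * dotv z x.
Proof. by rewrite dotvC dotvZl dotvC. Qed.

Lemma dotv_sum x : dotv x x = \sum_j x 0 j ^+ 2.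
Proof. by rewrite /dotv mxE; apply: eq_bigr => j _; rewrite mxE expr2. Qed.
Lemma dotv_ge0 x : 0 <= dotv x x.
Proof. by rewrite dotv_sum; apply: sumr_ge0 => j _; apply: sqr_ge0. Qed.
Lemma dotv_eq0 x : dotv x x = 0 -> x = 0.
Proof.
rewrite dotv_sum => h; apply/rowP => j; rewrite mxE.
have := psumr_eq0P (fun i _ => sqr_ge0 (x 0 i)) h (i:=j) isT.
by move/eqP; rewrite sqrf_eq0 => /eqP.
Qed.

Lemma dot2 (a b c d : R) (u v : 'rV[R]_n) :
  dotv (a *: u + b *: v) (c *: u + d *: v) =
  a * c * dotv u u + (a * d + b * c) * dotv u v + b * d * dotv v v.
Proof.
rewrite !dotvDl !dotvDr !dotvZl !dotvZr (dotvC v u); ring.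
Qed.

Lemma rank_le1 x y : (x <= y)%MS -> (\rank (col_mx x y) <= 1)%N.
Proof.
move=> /addsmx_idPr h; rewrite -addsmxE h.
exact: rank_leq_row.
Qed.

Lemma normv_sq x : normv x ^+ 2 = dotv x x.
Proof. by rewrite /normv sqr_sqrtr // dotv_ge0. Qed.

Lemma sin_cos_acos (N X Y g : R) : 0 < X -> 0 < Y -> 0 <= g ->
  X^+2 * Y^+2 - N^+2 = g^+2 ->
  sin (acos (N / (X * Y))) = g / (X * Y) /\ cos (acos (N / (X * Y))) = N / (X * Y).
Proof.
move=> hX hY hg he.
have hXY : 0 < X * Y by apply: mulr_gt0.
have h1 : 1 - (N / (X * Y)) ^+ 2 = (g / (X * Y)) ^+ 2.
  by rewrite !expr_div_n -he; field; rewrite !gt_eqF.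
have hb : (N / (X * Y)) ^+ 2 <= 1.
  rewrite -subr_ge0 h1; exact: sqr_ge0.
have hi : -1 <= N / (X * Y) <= 1.
  set w := N / (X * Y) in hb *; apply/andP; split; nra.
split; first by rewrite sin_acos // h1 sqrtr_sqr ger0_norm // divr_ge0 // ltW.
by rewrite acosK // in_itv.
Qed.
End H.

Lemma rank_le1' {R : realType} {n : nat} (x y : 'rV[R]_n) :
  (y <= x)%MS -> (\rank (col_mx x y) <= 1)%N.
Proof.
move=> /addsmx_idPl h; rewrite -addsmxE h.
exact: rank_leq_row.
Qed.

Ltac vec := apply/rowP => j; rewrite !mxE; ring.

Theorem mainTheorem19 (R : realType) (n : nat) (A1 A2 A3 : 'rV[R]_n) (t1 : R)
  (Q : 'rV[R]_n) :
  (2 <= n)%N ->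
  is_triangle A1 A2 A3 ->
  0 <= t1 -> t1 <= 1 ->
  on_ray A3 ((1 - t1) *: A1 + t1 *: A2) Q ->
  Q != A3 ->
  on_circumcircle A1 A2 A3 Q ->
  let a1 := vangle A1 A2 A3 in
  let a2 := vangle A2 A3 A1 in
  let a3 := vangle A3 A1 A2 in
  let m1 := (sin a2 ^+ 2 + t1 * sin (a1 - a2) * sin a3) * (1 - t1) in
  let m2 := (sin a2 ^+ 2 + t1 * sin (a1 - a2) * sin a3) * t1 in
  let m3 := - ((1 - t1) * t1 * sin a3 ^+ 2) in
  Q = (m1 + m2 + m3)^-1 *: (m1 *: A1 + m2 *: A2 + m3 *: A3).
Proof.
move=> hn htri ht0 ht1 [s [hs0 hQ]] hQA3 [_ [Oc [ [w1 [w2 [w3 [ho hOc]]]] [h2 [h3 hQc]]]]].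
have [u eu] : exists u, A2 = A1 + u by exists (A2 - A1); rewrite addrC subrK.
have [v ev] : exists v, A3 = A1 + v by exists (A3 - A1); rewrite addrC subrK.
subst A2 A3.
have eu1 : A1 + u - A1 = u by vec.
have ev1 : A1 + v - A1 = v by vec.
rewrite /is_triangle eu1 ev1 in htri.
have Du : u = 1 *: u + 0 *: v by vec.
have Dv : v = 0 *: u + 1 *: v by vec.
set p := dotv u u; set q := dotv v v; set r := dotv u v.
have hp0 : 0 <= p := dotv_ge0 u.
have hq0 : 0 <= q := dotv_ge0 v.
have hq : 0 < q.
  rewrite lt_neqAle hq0 andbT; apply/eqP => /esym /dotv_eq0 v0.
  by move: htri; rewrite v0 => htri; have := rank_le1' u 0 (sub0mx 1 u); rewrite htri.
set G := p * q - r ^+ 2.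
have key : dotv (q *: u + (- r) *: v) (q *: u + (- r) *: v) = q * G.
  rewrite dot2 -/p -/q -/r /G; ring.
have hG : 0 < G.
  have hG0 : 0 <= G by rewrite -(pmulr_rge0 _ hq) -key dotv_ge0.
  rewrite lt_neqAle hG0 andbT; apply/eqP => /esym G0.
  move: key; rewrite G0 mulr0 => /dotv_eq0 h.
  have hu : u = (q^-1 * r) *: v.
    have hqu : q *: u = r *: v by apply/eqP; rewrite -subr_eq0 -scaleNr h.
    by rewrite -scalerA -hqu scalerA mulVf ?scale1r // gt_eqF.
  have := rank_le1 _ v (scalemx_sub (q^-1 * r) (submx_refl v)); rewrite -hu htri //.
have hp : 0 < p.
  have := sqr_ge0 r; move: hG; rewrite /G; nra.
set A := p + q - 2 * r.
have hA : 0 < A.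
  have := sqr_ge0 (p - r); move: hG; rewrite /G /A; nra.
set c := Num.sqrt p; set b := Num.sqrt q; set a := Num.sqrt A; set g := Num.sqrt G.
have hc : 0 < c by rewrite sqrtr_gt0.
have hb : 0 < b by rewrite sqrtr_gt0.
have ha : 0 < a by rewrite sqrtr_gt0.
have hg : 0 < g by rewrite sqrtr_gt0.
have hc2 : c ^+ 2 = p by rewrite sqr_sqrtr // ltW.
have hb2 : b ^+ 2 = q by rewrite sqr_sqrtr // ltW.
have ha2 : a ^+ 2 = A by rewrite sqr_sqrtr // ltW.
have hg2 : g ^+ 2 = G by rewrite sqr_sqrtr // ltW.
have e1 : A1 + v - (A1 + u) = (-1) *: u + 1 *: v by vec.
have e2 : A1 - (A1 + u) = (-1) *: u + 0 *: v by vec.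
have e3 : A1 - (A1 + v) = 0 *: u + (-1) *: v by vec.
have e4 : A1 + u - (A1 + v) = 1 *: u + (-1) *: v by vec.
have na1 : normv ((-1) *: u + 1 *: v) = a.
  by rewrite /normv dot2 -/p -/q -/r /a /A; congr Num.sqrt; ring.
have na2 : normv (1 *: u + (-1) *: v) = a.
  by rewrite /normv dot2 -/p -/q -/r /a /A; congr Num.sqrt; ring.
have nc1 : normv ((-1) *: u + 0 *: v) = c.
  by rewrite /normv dot2 -/p -/q -/r /c; congr Num.sqrt; ring.
have nb1 : normv (0 *: u + (-1) *: v) = b.
  by rewrite /normv dot2 -/p -/q -/r /b; congr Num.sqrt; ring.
move=> a1 a2 a3 m1 m2 m3.
have [sa1 ca1] : sin a1 = g / (c * b) /\ cos a1 = r / (c * b).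
  rewrite /a1 /vangle eu1 ev1.
  apply: sin_cos_acos => //; first exact: ltW.
  by rewrite hc2 hb2 hg2 /G.
have [sa2 ca2] : sin a2 = g / (a * c) /\ cos a2 = (c ^+ 2 - r) / (a * c).
  have -> : c ^+ 2 - r = dotv ((-1) *: u + 1 *: v) ((-1) *: u + 0 *: v).
    by rewrite dot2 -/p -/q -/r hc2; ring.
  rewrite /a2 /vangle e1 e2 -na1 -nc1.
  apply: sin_cos_acos; rewrite ?na1 ?nc1 //; [exact: ltW | rewrite dot2 -/p -/q -/r ha2 hc2 hg2 /G /A; ring].
have [sa3 ca3] : sin a3 = g / (b * a) /\ cos a3 = (b ^+ 2 - r) / (b * a).
  have -> : b ^+ 2 - r = dotv (0 *: u + (-1) *: v) (1 *: u + (-1) *: v).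
    by rewrite dot2 -/p -/q -/r hb2; ring.
  rewrite /a3 /vangle e3 e4 -na2 -nb1.
  apply: sin_cos_acos; rewrite ?na2 ?nb1 //; [exact: ltW | rewrite dot2 -/p -/q -/r ha2 hb2 hg2 /G /A; ring].
pose K := g ^+ 2 / (a ^+ 2 * b ^+ 2 * c ^+ 2).
pose Xc := b ^+ 2 + t1 * (c ^+ 2 - 2 * r).
have hm1 : m1 = K * (1 - t1) * Xc.
  rewrite /m1 sinB sa1 ca1 sa2 ca2 sa3 /K /Xc; field.
  by rewrite !gt_eqF.
have hm2 : m2 = K * t1 * Xc.
  rewrite /m2 sinB sa1 ca1 sa2 ca2 sa3 /K /Xc; field.
  by rewrite !gt_eqF.
have hm3 : m3 = - (K * (1 - t1) * t1 * c ^+ 2).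
  rewrite /m3 sa3 /K; field.
  by rewrite !gt_eqF.
have hK : K != 0.
  by rewrite /K mulf_neq0 ?invr_neq0 ?mulf_neq0 ?expf_neq0 ?gt_eqF.
clearbody K.
have ew1 : w1 = 1 - w2 - w3 by rewrite -ho; ring.
have eO1 : A1 + u - Oc = (1 - w2) *: u + (- w3) *: v by rewrite hOc ew1; vec.
have eO0 : A1 - Oc = (- w2) *: u + (- w3) *: v by rewrite hOc ew1; vec.
have eO3 : A1 + v - Oc = (- w2) *: u + (1 - w3) *: v by rewrite hOc ew1; vec.
have eOQ : Q - Oc = (t1 * s - w2) *: u + (1 - s - w3) *: v by rewrite hQ hOc ew1; vec.
have E2 := congr1 (fun x => x ^+ 2) h2.
have E3 := congr1 (fun x => x ^+ 2) h3.
have EQ := congr1 (fun x => x ^+ 2) hQc.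
rewrite /= !normv_sq eO1 eO0 !dot2 -/p -/q -/r in E2.
rewrite /= !normv_sq eO3 eO0 !dot2 -/p -/q -/r in E3.
rewrite /= !normv_sq eOQ eO0 !dot2 -/p -/q -/r in EQ.
have E2' := congr1 (fun x => t1 * s * x) E2.
have E3' := congr1 (fun x => (1 - s) * x) E3.
simpl in E2', E3'.
have key2 : s * (s * (q - 2 * t1 * r + t1 ^+ 2 * p) - (q + t1 * p - 2 * t1 * r)) = 0.
  lra.
have s0 : s != 0.
  apply/eqP => s0; move: hQA3; rewrite hQ s0 scale0r addr0 eqxx //.
have hD : 0 < q - 2 * t1 * r + t1 ^+ 2 * p.
  have := sqr_ge0 (t1 * p - r); move: hG; rewrite /G; nra.
move/eqP: key2; rewrite mulf_eq0 (negbTE s0) /= subr_eq0 => /eqP key2.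
have hs : s = (b ^+ 2 + t1 * c ^+ 2 - 2 * t1 * r) / (b ^+ 2 - 2 * t1 * r + t1 ^+ 2 * c ^+ 2).
  rewrite hb2 hc2 -key2; field; rewrite gt_eqF //.
have hD' : b ^+ 2 - 2 * t1 * r + t1 ^+ 2 * c ^+ 2 != 0 by rewrite hb2 hc2 gt_eqF.
have hS : m1 + m2 + m3 = K * (b ^+ 2 - 2 * t1 * r + t1 ^+ 2 * c ^+ 2).
  rewrite hm1 hm2 hm3 /Xc; ring.
rewrite hS hm1 hm2 hm3 hQ hs /Xc.
apply/rowP => j; rewrite !mxE.
field; rewrite hK andbT exprMn; exact: hD'.
Qed.
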